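(* Let $A$, $B$ and $C$ be distinct (axis-parallel) rectangular regions in the plane. Assume $B$ shares an edge with $A$ and shares an edge with $C$, but $A$ and $C$ are disjoint except possibly in a single point. Let $S_A$, $S_B$, $S_C$ be finite sets of points in $A$, $B$ and $C$ respectively. Let $x_A$ and $x_C$ be the points of $S_B$ closest to $A$ and to $C$ respectively, and assume $x_A \neq x_C$. Let $P$ be a noncrossing Hamiltonian path through $S_B$ with endpoints $x_A$ and $x_C$. Let $P'$ be a path obtained from $P$ by adding an edge from $x_A$ to any point of $S_A$ and an edge from $x_C$ to any point of $S_C$. Then $P'$ is noncrossing.
   Context: Edges are straight line segments between points: for an edge $e=\{a,b\}$, $L(e)$ is the closed segment from $a$ to $b$. A path (set of edges) is noncrossing if no two of its edges have intersecting line segments (other than at a shared endpoint). The distance from a point $x$ to a set $R$ is $d(x,R)=\min_{y\in R} d(x,y)$ with $d$ the Euclidean distance; the point of $S_B$ closest to $A$ is the one minimizing $d(\cdot, A)$. *)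

(* Defs.v *)
From Stdlib Require Import Reals List.
Open Scope R_scope.

Definition point : Type := (R * R)%type.

Definition dist (p q : point) : R :=
  sqrt ((fst p - fst q) ^ 2 + (snd p - snd q) ^ 2).

Definition seg (p q : point) (z : point) : Prop :=
  exists t : R, 0 <= t <= 1 /\
    z = ((1 - t) * fst p + t * fst q, (1 - t) * snd p + t * snd q).

Record rect := Rect { rx1 : R; rx2 : R; ry1 : R; ry2 : R }.

Definition wf_rect (r : rect) : Prop := rx1 r < rx2 r /\ ry1 r < ry2 r.

Definition in_rect (r : rect) (p : point) : Prop :=
  rx1 r <= fst p <= rx2 r /\ ry1 r <= snd p <= ry2 r.

Definition is_side (r : rect) (p q : point) : Prop :=
  let c1 := (rx1 r, ry1 r) in let c2 := (rx2 r, ry1 r) in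
  let c3 := (rx2 r, ry2 r) in let c4 := (rx1 r, ry2 r) in
  (p, q) = (c1, c2) \/ (p, q) = (c2, c3) \/ (p, q) = (c3, c4) \/ (p, q) = (c4, c1).

Definition shares_edge (A B : rect) : Prop :=
  exists p q, is_side A p q /\
    (exists p' q', is_side B p' q' /\ forall z, seg p q z <-> seg p' q' z) /\
    (forall z, (in_rect A z /\ in_rect B z) <-> seg p q z).

Definition meet_in_at_most_a_point (A C : rect) : Prop :=
  forall p q, in_rect A p -> in_rect C p -> in_rect A q -> in_rect C q -> p = q.

Definition is_dist_set (x : point) (X : point -> Prop) (r : R) : Prop :=
  (exists y, X y /\ dist x y = r) /\ (forall y, X y -> r <= dist x y).

Definition closest_point (S : list point) (X : point -> Prop) (x : point) : Prop :=
  In x S /\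
  forall y, In y S -> y <> x ->
    forall r s, is_dist_set x X r -> is_dist_set y X s -> r < s.

Fixpoint path_edges (l : list point) : list (point * point) :=
  match l with
  | p :: ((q :: _) as l') => (p, q) :: path_edges l'
  | _ => nil
  end.

Definition noncrossing (E : list (point * point)) : Prop :=
  forall i j, (i < length E)%nat -> (j < length E)%nat -> i <> j ->
    forall z,
      seg (fst (nth i E ((0,0),(0,0)))) (snd (nth i E ((0,0),(0,0)))) z ->
      seg (fst (nth j E ((0,0),(0,0)))) (snd (nth j E ((0,0),(0,0)))) z ->
      (z = fst (nth i E ((0,0),(0,0))) \/ z = snd (nth i E ((0,0),(0,0)))) /\
      (z = fst (nth j E ((0,0),(0,0))) \/ z = snd (nth j E ((0,0),(0,0)))).

Definition hamiltonian_path (S : list point) (P : list point) (x y : point) : Prop :=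
  NoDup P /\ (forall z, In z P <-> In z S) /\
  ((hd (0,0) P = x /\ last P (0,0) = y) \/ (hd (0,0) P = y /\ last P (0,0) = x)).

(* Main.v *)
Require Import Defs.
From Stdlib Require Import Reals List Lra Lia Psatz Classical.
Open Scope R_scope.

Inductive dir := DR | DL | DT | DD.

Definition phi (d : dir) (p : point) : R :=
  match d with DR => fst p | DL => - fst p | DT => snd p | DD => - snd p end.

Definition kk (d : dir) (B : rect) : R :=
  match d with DR => rx2 B | DL => - rx1 B | DT => ry2 B | DD => - ry1 B end.

Definition adj (d : dir) (B A : rect) : Prop :=
  match d with
  | DR => rx1 A = rx2 B /\ ry1 A <= ry1 B /\ ry2 B <= ry2 A
  | DL => rx2 A = rx1 B /\ ry1 A <= ry1 B /\ ry2 B <= ry2 A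
  | DT => ry1 A = ry2 B /\ rx1 A <= rx1 B /\ rx2 B <= rx2 A
  | DD => ry2 A = ry1 B /\ rx1 A <= rx1 B /\ rx2 B <= rx2 A
  end.

Ltac split_mm :=
  unfold Rmax, Rmin in *;
  repeat match goal with
  | |- context [Rle_dec ?a ?b] => destruct (Rle_dec a b)
  | H : context [Rle_dec ?a ?b] |- _ => destruct (Rle_dec a b)
  end.

Lemma seg_coord p q z : seg p q z -> exists t, 0 <= t <= 1 /\
  fst z = (1-t)*fst p + t*fst q /\ snd z = (1-t)*snd p + t*snd q.
Proof. intros [t [Ht ->]]. exists t. simpl. auto. Qed.

Lemma seg_phi p q z : seg p q z -> exists t, 0 <= t <= 1 /\
  (forall d, phi d z = (1-t)*phi d p + t*phi d q) /\
  (t = 0 -> z = p) /\ (t = 1 -> z = q).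
Proof.
  intros [t [Ht ->]]. exists t. split; [exact Ht|]. split; [|split].
  - intros d; destruct d; simpl; ring.
  - intros ->. destruct p; simpl; f_equal; ring.
  - intros ->. destruct q; simpl; f_equal; ring.
Qed.

Lemma seg_l p q : seg p q p.
Proof. exists 0. split; [lra|]. destruct p; simpl; f_equal; ring. Qed.
Lemma seg_r p q : seg p q q.
Proof. exists 1. split; [lra|]. destruct q; simpl; f_equal; ring. Qed.

Lemma sqrt_ge u X : 0 <= X -> u^2 <= X -> u <= sqrt X.
Proof.
  intros H0 H. destruct (Rle_dec u 0). - pose proof (sqrt_pos X); lra.
  - rewrite <- (sqrt_pow2 u) by lra. apply sqrt_le_1_alt; auto.
Qed.

Lemma dist_ge p q : fst q - fst p <= Defs.dist p q /\ fst p - fst q <= Defs.dist p q /\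
  snd q - snd p <= Defs.dist p q /\ snd p - snd q <= Defs.dist p q.
Proof.
  unfold Defs.dist. pose proof (pow2_ge_0 (fst p - fst q)). pose proof (pow2_ge_0 (snd p - snd q)).
  repeat split; apply sqrt_ge; try lra; nra.
Qed.

Lemma dist_eq p q u : 0 <= u -> (fst p - fst q)^2 + (snd p - snd q)^2 = u^2 -> Defs.dist p q = u.
Proof. intros H E. unfold Defs.dist. rewrite E. apply sqrt_pow2; auto. Qed.

Lemma meet_x A C : meet_in_at_most_a_point A C -> wf_rect A -> wf_rect C ->
  rx2 A <= rx1 C \/ rx2 C <= rx1 A \/ ry2 A < ry1 C \/ ry2 C < ry1 A.
Proof.
  intros Hm [wA1 wA2] [wC1 wC2].
  destruct (Rle_lt_dec (rx2 A) (rx1 C)) as [h|h1]; [left; exact h|].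
  destruct (Rle_lt_dec (rx2 C) (rx1 A)) as [h|h2]; [right; left; exact h|].
  destruct (Rlt_le_dec (ry2 A) (ry1 C)) as [h|h3]; [right; right; left; exact h|].
  destruct (Rlt_le_dec (ry2 C) (ry1 A)) as [h|h4]; [right; right; right; exact h|].
  exfalso.
  assert (He := Hm (Rmax (rx1 A) (rx1 C), Rmax (ry1 A) (ry1 C))
                   (Rmin (rx2 A) (rx2 C), Rmax (ry1 A) (ry1 C))).
  unfold in_rect in He; simpl in He.
  split_mm; try (apply (f_equal fst) in He; simpl in He); lra.
Qed.

Lemma meet_y A C : meet_in_at_most_a_point A C -> wf_rect A -> wf_rect C ->
  ry2 A <= ry1 C \/ ry2 C <= ry1 A \/ rx2 A < rx1 C \/ rx2 C < rx1 A.
Proof.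
  intros Hm [wA1 wA2] [wC1 wC2].
  destruct (Rle_lt_dec (ry2 A) (ry1 C)) as [h|h1]; [left; exact h|].
  destruct (Rle_lt_dec (ry2 C) (ry1 A)) as [h|h2]; [right; left; exact h|].
  destruct (Rlt_le_dec (rx2 A) (rx1 C)) as [h|h3]; [right; right; left; exact h|].
  destruct (Rlt_le_dec (rx2 C) (rx1 A)) as [h|h4]; [right; right; right; exact h|].
  exfalso.
  assert (He := Hm (Rmax (rx1 A) (rx1 C), Rmax (ry1 A) (ry1 C))
                   (Rmax (rx1 A) (rx1 C), Rmin (ry2 A) (ry2 C))).
  unfold in_rect in He; simpl in He.
  split_mm; try (apply (f_equal snd) in He; simpl in He); lra.
Qed.

Lemma adj_of_shares A B : wf_rect A -> wf_rect B -> shares_edge B A -> exists d, adj d B A.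
Proof.
  intros [HA1 HA2] [HB1 HB2] [p [q [Hs [_ Hi]]]].
  assert (Hp := proj2 (Hi p) (seg_l p q)).
  assert (Hq := proj2 (Hi q) (seg_r p q)).
  unfold is_side in Hs. destruct Hs as [H|[H|[H|H]]]; injection H as -> ->;
    unfold in_rect in Hp, Hq; simpl in Hp, Hq.
  - exists DD. simpl.
    destruct (Rle_dec (ry2 A) (ry1 B)) as [h|h]; [lra|exfalso].
    set (w := (rx1 B, Rmin (ry2 A) (ry2 B))).
    assert (Hw : seg (rx1 B, ry1 B) (rx2 B, ry1 B) w).
    { apply Hi. unfold w, in_rect; simpl. split_mm; lra. }
    destruct (seg_coord _ _ _ Hw) as [t [_ [_ Hy]]]. unfold w in Hy; simpl in Hy.
    assert (Rmin (ry2 A) (ry2 B) = ry1 B) by (rewrite Hy; ring). split_mm; lra.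
  - exists DR. simpl.
    destruct (Rle_dec (rx2 B) (rx1 A)) as [h|h]; [lra|exfalso].
    set (w := (Rmax (rx1 A) (rx1 B), ry1 B)).
    assert (Hw : seg (rx2 B, ry1 B) (rx2 B, ry2 B) w).
    { apply Hi. unfold w, in_rect; simpl. split_mm; lra. }
    destruct (seg_coord _ _ _ Hw) as [t [_ [Hx _]]]. unfold w in Hx; simpl in Hx.
    assert (Rmax (rx1 A) (rx1 B) = rx2 B) by (rewrite Hx; ring). split_mm; lra.
  - exists DT. simpl.
    destruct (Rle_dec (ry2 B) (ry1 A)) as [h|h]; [lra|exfalso].
    set (w := (rx1 B, Rmax (ry1 A) (ry1 B))).
    assert (Hw : seg (rx2 B, ry2 B) (rx1 B, ry2 B) w).
    { apply Hi. unfold w, in_rect; simpl. split_mm; lra. }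
    destruct (seg_coord _ _ _ Hw) as [t [_ [_ Hy]]]. unfold w in Hy; simpl in Hy.
    assert (Rmax (ry1 A) (ry1 B) = ry2 B) by (rewrite Hy; ring). split_mm; lra.
  - exists DL. simpl.
    destruct (Rle_dec (rx2 A) (rx1 B)) as [h|h]; [lra|exfalso].
    set (w := (Rmin (rx2 A) (rx2 B), ry1 B)).
    assert (Hw : seg (rx1 B, ry2 B) (rx1 B, ry1 B) w).
    { apply Hi. unfold w, in_rect; simpl. split_mm; lra. }
    destruct (seg_coord _ _ _ Hw) as [t [_ [Hx _]]]. unfold w in Hx; simpl in Hx.
    assert (Rmin (rx2 A) (rx2 B) = rx1 B) by (rewrite Hx; ring). split_mm; lra.
Qed.

Lemma adj_bounds d A B p : wf_rect A -> wf_rect B -> adj d B A ->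
  (in_rect B p -> phi d p <= kk d B) /\ (in_rect A p -> kk d B <= phi d p).
Proof.
  intros [] [] Had; unfold in_rect; destruct d; simpl in *; split; intros; lra.
Qed.

Lemma dist_adj d A B p : wf_rect A -> wf_rect B -> adj d B A -> in_rect B p ->
  is_dist_set p (in_rect A) (kk d B - phi d p).
Proof.
  intros [] [] Had Hp. unfold in_rect in Hp. split.
  - destruct d; simpl in *.
    + exists (rx2 B, snd p). split. unfold in_rect; simpl; lra.
      apply dist_eq; simpl; [lra|ring].
    + exists (rx1 B, snd p). split. unfold in_rect; simpl; lra.
      apply dist_eq; simpl; [lra|ring].
    + exists (fst p, ry2 B). split. unfold in_rect; simpl; lra.
      apply dist_eq; simpl; [lra|ring].
    + exists (fst p, ry1 B). split. unfold in_rect; simpl; lra.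
      apply dist_eq; simpl; [lra|ring].
  - intros y Hy. unfold in_rect in Hy. pose proof (dist_ge p y).
    destruct d; simpl in *; lra.
Qed.

Lemma cross_facts dA dC A B C : wf_rect A -> wf_rect B -> wf_rect C ->
  meet_in_at_most_a_point A C -> adj dA B A -> adj dC B C ->
  (forall p, in_rect A p -> phi dC p <= kk dC B) /\
  (forall p, in_rect C p -> phi dA p <= kk dA B).
Proof.
  intros wA wB wC Hm HA HC.
  pose proof (meet_x A C Hm wA wC) as Mx. pose proof (meet_y A C Hm wA wC) as My.
  destruct wA, wB, wC.
  destruct dA, dC; simpl in *; split; intros p Hp; unfold in_rect in Hp;
    destruct Mx as [?|[?|[?|?]]]; destruct My as [?|[?|[?|?]]]; lra.
Qed.

Lemma core_real a1 b1 c1 e1 a2 b2 c2 e2 kA kC t s : 0<=t<=1 -> 0<=s<=1 ->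
  c1 < a1 -> a2 < c2 -> a1 <= kA <= b1 -> e1 <= kA -> c2 <= kC <= e2 -> b2 <= kC ->
  (1-t)*a1 + t*b1 = (1-s)*c1 + s*e1 -> (1-t)*a2 + t*b2 = (1-s)*c2 + s*e2 ->
  t = 1 /\ s = 1.
Proof.
  intros Ht Hs H1 H2 H3 H4 H5 H6 E1 E2.
  assert (h1 : 0 <= s*(b1 - e1)) by (apply Rmult_le_pos; lra).
  assert (h2 : 0 <= t*(e2 - b2)) by (apply Rmult_le_pos; lra).
  assert (I1 : (1-s)*(a1-c1) <= (s-t)*(b1-a1)) by nra.
  assert (I2 : (1-t)*(c2-a2) <= (t-s)*(e2-c2)) by nra.
  destruct (Rle_dec t s).
  - assert (0 <= (s-t)*(e2-c2)) by (apply Rmult_le_pos; lra).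
    assert (t = 1) by nra. subst. split; lra.
  - assert (0 <= (t-s)*(b1-a1)) by (apply Rmult_le_pos; lra).
    assert (s = 1) by nra. subst. lra.
Qed.

Lemma core dA dC kA kC xA a xC c z :
  phi dA xC < phi dA xA -> phi dC xA < phi dC xC ->
  phi dA xA <= kA <= phi dA a -> phi dA c <= kA ->
  phi dC xC <= kC <= phi dC c -> phi dC a <= kC ->
  seg xA a z -> seg xC c z -> z = a /\ z = c.
Proof.
  intros H1 H2 H3 H4 H5 H6 S1 S2.
  destruct (seg_phi _ _ _ S1) as [t [Ht [Pt [_ Et]]]].
  destruct (seg_phi _ _ _ S2) as [s [Hs [Ps [_ Es]]]].
  assert (E1 := eq_trans (eq_sym (Pt dA)) (Ps dA)).
  assert (E2 := eq_trans (eq_sym (Pt dC)) (Ps dC)).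
  destruct (core_real _ _ _ _ _ _ _ _ _ _ _ _ Ht Hs H1 H2 H3 H4 H5 H6 E1 E2).
  auto.
Qed.

Lemma evp d xA a p q z :
  (phi d p < phi d xA \/ p = xA) -> (phi d q < phi d xA \/ q = xA) ->
  phi d xA <= phi d a -> seg p q z -> seg xA a z ->
  (z = p \/ z = q) /\ (z = xA \/ z = a).
Proof.
  intros Hp Hq Ha S1 S2.
  destruct (seg_phi _ _ _ S1) as [t [Ht [Pt [Et0 Et1]]]].
  destruct (seg_phi _ _ _ S2) as [s [Hs [Ps _]]].
  assert (E := eq_trans (eq_sym (Pt d)) (Ps d)).
  assert (G : phi d xA <= (1-t)*phi d p + t*phi d q) by nra.
  destruct Hp as [Hp| ->]; destruct Hq as [Hq| ->].
  - exfalso.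
    destruct (Rle_dec t 0).
    + assert (t = 0) by lra. subst. lra.
    + assert (0 < t * (phi d xA - phi d q)) by (apply Rmult_lt_0_compat; lra).
      assert (0 <= (1-t) * (phi d xA - phi d p)) by (apply Rmult_le_pos; lra).
      nra.
  - assert (t = 1) by nra. auto.
  - assert (t = 0) by nra. auto.
  - assert (z = xA).
    { destruct (seg_coord _ _ _ S1) as [u [_ [X Y]]].
      destruct z, xA; simpl in *; f_equal; [rewrite X|rewrite Y]; ring. }
    auto.
Qed.

Lemma path_edges_in l e : In e (path_edges l) -> In (fst e) l /\ In (snd e) l.
Proof.
  induction l as [|p l IH]; simpl; [tauto|].
  destruct l as [|q l']; simpl; [tauto|].
  intros [<-|H]; simpl; [tauto|].
  destruct (IH H); simpl in *; tauto.
Qed.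

Theorem lemma3 (A B C : rect) (SA SB SC : list point) (xA xC : point)
    (P : list point) (a c : point) :
  wf_rect A -> wf_rect B -> wf_rect C ->
  A <> B -> B <> C -> A <> C ->
  shares_edge B A -> shares_edge B C ->
  meet_in_at_most_a_point A C ->
  (forall p, In p SA -> in_rect A p) ->
  (forall p, In p SB -> in_rect B p) ->
  (forall p, In p SC -> in_rect C p) ->
  closest_point SB (in_rect A) xA ->
  closest_point SB (in_rect C) xC ->
  xA <> xC ->
  hamiltonian_path SB P xA xC ->
  noncrossing (path_edges P) ->
  In a SA -> In c SC ->
  noncrossing (path_edges P ++ (xA, a) :: (xC, c) :: nil).
Proof.
  intros wA wB wC _ _ _ sBA sBC Hm HSA HSB HSC cA cC Hne Hham Hnc Ha Hc.
  destruct (adj_of_shares A B wA wB sBA) as [dA adA].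
  destruct (adj_of_shares C B wC wB sBC) as [dC adC].
  destruct (cross_facts dA dC A B C wA wB wC Hm adA adC) as [HAC HCA].
  destruct cA as [xAin cA']. destruct cC as [xCin cC'].
  assert (ltA : forall y, In y SB -> y <> xA -> phi dA y < phi dA xA).
  { intros y Hy Hyne.
    pose proof (cA' y Hy Hyne _ _ (dist_adj dA A B xA wA wB adA (HSB _ xAin))
                 (dist_adj dA A B y wA wB adA (HSB _ Hy))). lra. }
  assert (ltC : forall y, In y SB -> y <> xC -> phi dC y < phi dC xC).
  { intros y Hy Hyne.
    pose proof (cC' y Hy Hyne _ _ (dist_adj dC C B xC wC wB adC (HSB _ xCin))
                 (dist_adj dC C B y wC wB adC (HSB _ Hy))). lra. }
  assert (orA : forall y, In y SB -> phi dA y < phi dA xA \/ y = xA).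
  { intros y Hy. destruct (classic (y = xA)); auto. }
  assert (orC : forall y, In y SB -> phi dC y < phi dC xC \/ y = xC).
  { intros y Hy. destruct (classic (y = xC)); auto. }
  pose proof (adj_bounds dA A B xA wA wB adA) as [bA1 _].
  pose proof (adj_bounds dA A B a wA wB adA) as [_ bA2].
  pose proof (adj_bounds dC C B xC wC wB adC) as [bC1 _].
  pose proof (adj_bounds dC C B c wC wB adC) as [_ bC2].
  specialize (bA1 (HSB _ xAin)). specialize (bA2 (HSA _ Ha)).
  specialize (bC1 (HSB _ xCin)). specialize (bC2 (HSC _ Hc)).
  pose proof (HAC a (HSA _ Ha)). pose proof (HCA c (HSC _ Hc)).
  assert (lt1 : phi dA xC < phi dA xA) by (apply ltA; auto).
  assert (lt2 : phi dC xA < phi dC xC) by (apply ltC; auto).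
  destruct Hham as [_ [HPS _]].
  set (E := path_edges P) in *.
  assert (Ein : forall i, (i < length E)%nat ->
     In (fst (nth i E ((0,0),(0,0)))) SB /\ In (snd (nth i E ((0,0),(0,0)))) SB).
  { intros i Hi. destruct (path_edges_in P _ (nth_In E ((0,0),(0,0)) Hi)).
    split; apply HPS; auto. }
  set (F := (xA, a) :: (xC, c) :: nil).
  assert (Hcase : forall k, (k < length (E ++ F))%nat ->
     ((k < length E)%nat /\ nth k (E ++ F) ((0,0),(0,0)) = nth k E ((0,0),(0,0))) \/
     (k = length E /\ nth k (E ++ F) ((0,0),(0,0)) = (xA, a)) \/
     (k = S (length E) /\ nth k (E ++ F) ((0,0),(0,0)) = (xC, c))).
  { intros k Hk. rewrite length_app in Hk. simpl in Hk.
    destruct (Nat.lt_ge_cases k (length E)).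
    - left. split; auto. apply app_nth1; auto.
    - right. rewrite app_nth2 by auto.
      assert (k = length E \/ k = S (length E)) as [->| ->] by lia.
      + left. rewrite Nat.sub_diag. auto.
      + right. replace (S (length E) - length E)%nat with 1%nat by lia. auto. }
  intros i j Hi Hj Hij z Z1 Z2.
  destruct (Hcase i Hi) as [[Li Ni]|[[Li Ni]|[Li Ni]]];
  destruct (Hcase j Hj) as [[Lj Nj]|[[Lj Nj]|[Lj Nj]]];
  rewrite Ni in *; rewrite Nj in *; simpl in *.
  - apply Hnc; auto.
  - destruct (Ein i Li). apply (evp dA xA a); auto; lra.
  - destruct (Ein i Li). apply (evp dC xC c); auto; lra.
  - destruct (Ein j Lj). destruct (evp dA xA a _ _ z (orA _ H1) (orA _ H2)); auto; lra.
  - exfalso; apply Hij; congruence.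
  - destruct (core dA dC (kk dA B) (kk dC B) xA a xC c z); auto.
  - destruct (Ein j Lj). destruct (evp dC xC c _ _ z (orC _ H1) (orC _ H2)); auto; lra.
  - destruct (core dA dC (kk dA B) (kk dC B) xA a xC c z); auto.
  - exfalso; apply Hij; congruence.
Qed.
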